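(* Let $\Delta$ be a pure $d$-dimensional APC simplicial complex, $0\le i<d$, let $\Upsilon$ be an $i$-dimensional spanning tree of $\Delta$ with $\tilde H_{i-1}(\Upsilon;\mathbb{Z})=0$, and let $\Theta=\Delta_i\setminus\Upsilon_i$. Then, with $L=L_{\Delta,i}$, $$L\big(C_i(\Delta;\mathbb{Z})\big)=L\big(C_i(\Theta;\mathbb{Z})\big),$$ where $C_i(\Theta;\mathbb{Z})\subseteq C_i(\Delta;\mathbb{Z})$ is the span of the faces in $\Theta$.
   Context: For a finite simplicial complex $\Delta$, $\Delta_i$ is its set of $i$-faces, $\Delta_{(i)}$ its $i$-skeleton, $f_i=|\Delta_i|$. $C_i(\Delta;\mathbb{Z})$ is free abelian on the (fixed-orientation) $i$-faces, $\partial_{\Delta,i}$ the simplicial boundary map, and $\partial^*_{\Delta,i}$ its transpose. The combinatorial Laplacian is $L_{\Delta,i}=\partial_{i+1}\partial^*_{i+1}:C_i(\Delta;\mathbb{Z})\to C_i(\Delta;\mathbb{Z})$. $\tilde H$ is reduced homology, $\beta_i=\dim_\mathbb{Q}\tilde H_i(\cdot;\mathbb{Q})$. A pure $d$-dimensional complex is APC if $\tilde H_j(\Delta;\mathbb{Q})=0$ for all $j<d$. For a pure $k$-dimensional complex $\Gamma$, a subcomplex $\Upsilon$ with $\Upsilon_{(k-1)}=\Gamma_{(k-1)}$ is a spanning tree if $\tilde H_k(\Upsilon;\mathbb{Z})=0$, $\tilde H_{k-1}(\Upsilon;\mathbb{Q})=0$, and $f_k(\Upsilon)=f_k(\Gamma)-\beta_k(\Gamma)+\beta_{k-1}(\Gamma)$;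 an $i$-dimensional spanning tree of $\Delta$ is a spanning tree of $\Delta_{(i)}$. *)

(* Defs.v *)
From HB Require Import structures.
From mathcomp Require Import all_boot all_order all_algebra.
Set Implicit Arguments. Unset Strict Implicit. Unset Printing Implicit Defensive.
Import Order.TTheory GRing.Theory Num.Theory.
Local Open Scope ring_scope.

(* Abstract simplicial complexes on the vertex set 'I_n, given by their set of
   faces (including the empty face, so that reduced homology is the homology of
   the augmented chain complex).  Faces are indexed by their SIZE k = dim + 1. *)

Definition is_complex n (K : {set {set 'I_n}}) : Prop :=
  forall F G : {set 'I_n}, F \in K -> G \subset F -> G \in K.

Definition subcomplex n (U K : {set {set 'I_n}}) : Prop :=
  is_complex U /\ U \subset K.

Definition fcs n (K : {set {set 'I_n}}) (k : nat) : {set {set 'I_n}} :=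
  [set F in K | #|F| == k].

Definition skel n (K : {set {set 'I_n}}) (i : nat) : {set {set 'I_n}} :=
  [set F in K | #|F| <= i.+1]%N.

Definition skel_sz n (K : {set {set 'I_n}}) (s : nat) : {set {set 'I_n}} :=
  [set F in K | #|F| <= s]%N.

(* incidence sign [F : G] for G a codimension-one face of F, using the
   orientation induced by the order of 'I_n: removing the j-th smallest
   vertex (0-based) gives sign (-1)^j. *)
Definition bsign (R : nzRingType) n (G F : {set 'I_n}) : R :=
  \prod_(v in F :\: G) (-1) ^+ #|[set u in F | (u < v)%N]|.

(* boundary matrix from chains on faces of size k+1 to chains on faces of
   size k (chains are column vectors indexed by enum of the face set);
   this is partial_{k} in dimension indexing *)
Definition bdm (R : nzRingType) n (K : {set {set 'I_n}}) (k : nat)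
  : 'M[R]_(#|fcs K k|, #|fcs K k.+1|) :=
  \matrix_(a < #|fcs K k|, b < #|fcs K k.+1|)
    (let G := enum_val (A := fcs K k) a in
     let F := enum_val (A := fcs K k.+1) b in
     if G \subset F then bsign R G F else 0).

Definition rkQ n (K : {set {set 'I_n}}) (k : nat) : nat :=
  \rank (bdm rat K k).

(* reduced rational Betti number in dimension k-1 (faces of size k):
   dim ker - dim im, computed over Q *)
Definition betti n (K : {set {set 'I_n}}) (k : nat) : nat :=
  (#|fcs K k| - (if k is k'.+1 then rkQ K k' else 0%N) - rkQ K k)%N.

Definition is_cycle (R : nzRingType) n (K : {set {set 'I_n}}) (k : nat)
  : 'cV[R]_#|fcs K k| -> Prop :=
  match k return 'cV[R]_#|fcs K k| -> Prop with
  | 0%N => fun _ => True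
  | k'.+1 => fun c => bdm R K k' *m c = 0
  end.

(* reduced integral homology in dimension k-1 vanishes *)
Definition Zacyclic n (K : {set {set 'I_n}}) (k : nat) : Prop :=
  forall c : 'cV[int]_#|fcs K k|, is_cycle c ->
    exists b : 'cV[int]_#|fcs K k.+1|, bdm int K k *m b = c.

Definition pure n (K : {set {set 'I_n}}) (d : nat) : Prop :=
  (exists F, F \in K /\ #|F| = d.+1) /\
  forall F, F \in K -> exists G, [/\ G \in K, F \subset G & #|G| = d.+1].

(* APC: reduced rational homology vanishes in all dimensions j < d,
   i.e. for all sizes k = j+1 <= d (including j = -1) *)
Definition APC n (K : {set {set 'I_n}}) (d : nat) : Prop :=
  forall k : nat, (k <= d)%N -> betti K k = 0%N.

Definition spanning_tree n (G : {set {set 'I_n}}) (k : nat)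
  (U : {set {set 'I_n}}) : Prop :=
  [/\ subcomplex U G,
      skel_sz U k = skel_sz G k,
      Zacyclic U k.+1,
      betti U k = 0%N &
      (#|fcs U k.+1|%:Z = #|fcs G k.+1|%:Z - (betti G k.+1)%:Z + (betti G k)%:Z)].

(* combinatorial Laplacian L_{K,i} = d_{i+1} d_{i+1}^* on C_i *)
Definition laplacian n (K : {set {set 'I_n}}) (i : nat)
  : 'M[int]_#|fcs K i.+1| :=
  bdm int K i.+1 *m (bdm int K i.+1)^T.

(* Main.v *)
Require Import Defs.
From HB Require Import structures.
From mathcomp Require Import all_boot all_order all_algebra.
Set Implicit Arguments. Unset Strict Implicit. Unset Printing Implicit Defensive.
Import Order.TTheory GRing.Theory Num.Theory.
Local Open Scope ring_scope.
Lemma int_sq1 (d z : int) : z * d = 1 -> d * d = 1.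
Proof.
move/intUnitRing.unitzPl; rewrite /intUnitRing.unitz unfold_in /=.
by case/orP=> /eqP->.
Qed.

Lemma surjT m p (A : 'M[int]_(m,p)) :
 (forall x : 'cV[int]_p, A *m x = 0 -> x = 0) ->
 (forall (k:int) (y : 'cV[int]_m) (x : 'cV[int]_p), k != 0 -> A *m x = k *: y -> exists x' : 'cV[int]_p, A *m x' = y) ->
 forall w : 'cV[int]_p, exists u : 'cV[int]_m, A^T *m u = w.
Proof.
move=> inj tf w.
have [L uL [R uR [d _ dA]]] := int_Smith_normal_form A.
set S := \matrix_(i, j) _ in dA.
have H (j : 'I_p) : exists2 k : 'I_m, val k = val j & d`_j * d`_j = 1.
  set x := invmx R *m delta_mx j (0 : 'I_1).
  have Ax : A *m x = L *m (S *m delta_mx j (0:'I_1)).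
    by rewrite dA /x -!mulmxA (mulmxA R) mulmxV // mul1mx.
  have dx : x != 0.
    apply/eqP=> x0; have := congr1 (mulmx R) x0.
    rewrite /x mulmxA mulmxV // mul1mx mulmx0.
    move=> e; have := congr1 (fun M : 'cV[int]_p => M j 0) e.
    by rewrite !mxE !eqxx /= => /eqP; rewrite oner_eq0.
  case: (ltnP j m) => jm; last first.
    suff: S *m delta_mx j (0:'I_1) = 0 by move=> S0; case/eqP: dx; apply: inj; rewrite Ax S0 mulmx0.
    apply/matrixP=> a b; rewrite -colE !mxE.
    by case: eqP => [e|]; rewrite ?mulr0n //; have := ltn_ord a; rewrite e ltnNge jm.
  pose k := Ordinal jm; exists k => //.
  have Sd : S *m delta_mx j (0:'I_1) = d`_j *: delta_mx k (0 : 'I_1).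
    apply/matrixP=> a b; rewrite -colE !mxE (ord1 b) eqxx andbT.
    case: (eqVneq a k) => [->|ne]; first by rewrite eqxx mulr1 /=.
    rewrite mulr0 (_ : (nat_of_ord a == j) = false) ?mulr0n //.
    by apply: contraNF ne => /eqP e; apply/eqP/val_inj.
  have dj : d`_j != 0.
    apply/eqP=> d0; case/eqP: dx; apply: inj; by rewrite Ax Sd d0 scale0r mulmx0.
  have [x' Ax'] : exists x' : 'cV[int]_p, A *m x' = L *m delta_mx k (0:'I_1).
    by apply: (tf _ _ x dj); rewrite Ax Sd scalemxAr.
  have : S *m (R *m x') = delta_mx k (0:'I_1).
    by rewrite -(mulKmx uL (S *m (R *m x'))) (mulmxA S) (mulmxA L) (mulmxA L S) -dA Ax' mulKmx.
  move/matrixP/(_ k 0); rewrite !mxE !eqxx /=.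
  rewrite (bigD1 j) //= big1 ?addr0; last first.
    move=> a aj; rewrite !mxE.
    rewrite (_ : (nat_of_ord k == a) = false) ?mulr0n ?mul0r //.
    by apply: contraNF aj => /eqP e; apply/eqP/val_inj; rewrite /= -e.
  rewrite !mxE -[val k]/(val j) eqxx mulr1n => e.
  by apply: (int_sq1 (z := \sum_j0 R j j0 * x' j0 0)); rewrite mulrC.
pose v (z : 'cV[int]_p) : 'cV[int]_m := \col_k (d`_k * \sum_(j : 'I_p | val j == val k) z j 0).
have Sv (z : 'cV[int]_p) : S^T *m v z = z.
  apply/matrixP=> j b; rewrite (ord1 b) !mxE.
  have [k kj dd] := H j.
  rewrite (bigD1 k) //= big1 ?addr0; last first.
    move=> a ak; rewrite !mxE.
    rewrite (_ : (nat_of_ord a == j) = false) ?mulr0n ?mul0r //.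
    by apply: contraNF ak => /eqP e; apply/eqP/val_inj; rewrite /= e kj.
  have kj' : nat_of_ord k = nat_of_ord j := kj.
  rewrite /S /v !mxE kj' eqxx mulr1n (big_pred1 j) ?mulrA ?dd ?mul1r //.
  by move=> a /=; rewrite kj'.
exists (invmx L^T *m v (invmx R^T *m w)).
rewrite dA !trmx_mul -!mulmxA (mulmxA L^T) mulmxV ?unitmx_tr // mul1mx Sv.
by rewrite mulmxA mulmxV ?unitmx_tr // mul1mx.
Qed.

Definition cnt n (A : {set 'I_n}) (v : 'I_n) := #|[set u in A | (u < v)%N]|.

Lemma bsign1 n (G F : {set 'I_n}) z : F :\: G = [set z] ->
  bsign int G F = (-1) ^+ cnt F z.
Proof. by move=> e; rewrite /bsign e big_set1. Qed.

Lemma cntU1 n (A : {set 'I_n}) z v : z \notin A -> cnt (z |: A) v = ((z < v)%N + cnt A v)%N.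
Proof.
move=> zA; rewrite /cnt.
case: (ltnP z v) => zv /=.
  rewrite (_ : [set u in z |: A | (u < v)%N] = z |: [set u in A | (u < v)%N]).
    by rewrite cardsU1 !inE (negbTE zA).
  apply/setP=> u; rewrite !inE.
  by case: (eqVneq u z) => [->|]; rewrite ?zv.
apply: eq_card => u; rewrite !inE.
by case: (eqVneq u z) => [->|_] //=; rewrite ltnNge zv !andbF.
Qed.

Definition ent n (H G F : {set 'I_n}) : int :=
  (if H \subset G then bsign int H G else 0) * (if G \subset F then bsign int G F else 0).

Ltac solve_set x y H xH yH nxy :=
  let u := fresh "u" in let Hu := fresh "Hu" in let ex := fresh "ex" in let ey := fresh "ey" in
  apply/setP=> u; rewrite !inE; case Hu: (u \in H); case ex: (u == x); case ey: (u == y) => //=;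
  try (move/eqP: ex => ?; subst); try (move/eqP: ey => ?; subst);
  rewrite ?Hu ?eqxx in xH yH nxy *.

Lemma core n (H : {set 'I_n}) (x y : 'I_n) : (x < y)%N -> x \notin H -> y \notin H ->
  ent H (x |: H) (x |: (y |: H)) + ent H (y |: H) (x |: (y |: H)) = 0.
Proof.
move=> xy xH yH.
have nxy : x != y by rewrite neq_ltn xy.
have yxH : y \notin x |: H by rewrite !inE eq_sym (negbTE nxy).
have xyH : x \notin y |: H by rewrite !inE (negbTE nxy).
rewrite /ent !subsetU1.
rewrite setUS ?subsetU1 //.
rewrite (@bsign1 _ _ _ x); last by solve_set x y H xH yH nxy.
rewrite (@bsign1 _ _ _ y); last by solve_set x y H xH yH nxy.
rewrite (@bsign1 _ _ _ y); last by solve_set x y H xH yH nxy.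
rewrite (@bsign1 _ _ _ x); last by solve_set x y H xH yH nxy.
rewrite setUCA.
rewrite !cntU1 // !ltnn xy [(y < x)%N]ltnNge (ltnW xy) /= !add0n add1n exprS mulN1r.
by rewrite mulrN mulrC addNr.
Qed.

Lemma sum_ent n (K : {set {set 'I_n}}) k (H F : {set 'I_n}) : is_complex K -> F \in K ->
  #|H| = k -> #|F| = k.+2 -> \sum_(G in fcs K k.+1) ent H G F = 0.
Proof.
move=> cK FK cH cF.
case: (boolP (H \subset F)) => HF; last first.
  apply: big1 => G _; rewrite /ent; case: ifP => HG; rewrite ?mul0r //; case: ifP => GF; rewrite ?mulr0 //.
  by case/negP: HF; exact: subset_trans HG GF.
have : #|F :\: H| == 2%N.
 by rewrite (cardsDS HF) cF cH -addn2 addKn.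
case/cards2P => x [y [nxy e]].
have xFH : x \in F :\: H by rewrite e !inE eqxx.
have yFH : y \in F :\: H by rewrite e !inE eqxx orbT.
move: (xFH) (yFH); rewrite !inE => /andP[xH xF] /andP[yH yF].
have Fe : F = x |: (y |: H).
  apply/setP=> u; rewrite !inE; case: (boolP (u \in H)) => uH.
    by rewrite (subsetP HF) ?orbT.
  have := congr1 (fun S : {set 'I_n} => u \in S) e; rewrite /= !inE uH /= => ->; by rewrite orbF.
rewrite (bigID (fun G : {set 'I_n} => (H \subset G) && (G \subset F))) /= [X in _ + X]big1 ?addr0; last first.
  move=> G /andP[_]; rewrite negb_and /ent; case/orP=> /negbTE->; by rewrite ?mul0r ?mulr0.
rewrite (eq_bigl (mem [set x |: H; y |: H])); last first.
  move=> G; rewrite /= !inE; apply/idP/idP.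
    case/andP=> /andP[GK cG] /andP[HG GF].
    have : #|G :\: H| == 1 by rewrite cardsDS // (eqP cG) cH subSnn.
    case/cards1P => z ez.
    have zG : z \in G :\: H by rewrite ez inE.
    have zx : (z == x) || (z == y).
      have : z \in F :\: H by rewrite !inE; move: zG; rewrite !inE => /andP[-> /(subsetP GF)->].
      by rewrite e !inE.
    have Ge : G = z |: H.
      apply/setP=> u; rewrite !inE; case: (boolP (u \in H)) => uH; first by rewrite (subsetP HG) ?orbT.
      have := congr1 (fun S : {set 'I_n} => u \in S) ez; rewrite /= !inE uH /=.
      by rewrite orbF.
    by case/orP: zx => /eqP zx; rewrite Ge zx eqxx ?orbT.
  have sub : forall z, z \in F -> z |: H \subset F.
    by move=> z zF; rewrite subUset sub1set zF HF.
  have cU : forall z, z \notin H -> #|z |: H| == k.+1 by move=> z zH; rewrite cardsU1 zH cH.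
  have ok : forall z, z \in F -> z \notin H ->
    ((z |: H \in K) && (#|z |: H| == k.+1)) && ((H \subset z |: H) && (z |: H \subset F)).
    move=> z zF zH; rewrite (cK F) ?sub ?cU ?subsetU1 //.
  by case/orP=> /eqP->; apply: ok.
rewrite big_setU1 ?big_set1 /=; last first.
  rewrite inE; apply/negP=> /eqP exy.
  have : x \in y |: H by rewrite -exy !inE eqxx.
  by rewrite !inE (negbTE nxy) (negbTE xH).
rewrite Fe; case: (ltngtP x y) => xy.
- exact: core.
- by rewrite addrC setUCA; apply: core.
- by case/eqP: nxy; apply: val_inj.
Qed.

Lemma bdm_bdm n (K : {set {set 'I_n}}) k : is_complex K ->
  bdm int K k *m bdm int K k.+1 = 0.
Proof.
move=> cK; apply/matrixP=> a b; rewrite !mxE.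
have Ha := enum_valP a; have Hb := enum_valP b.
move: Ha Hb; rewrite !inE => /andP[_ /eqP ca] /andP[FK /eqP cb].
transitivity (\sum_(G in fcs K k.+1) ent (enum_val a) G (enum_val b)); last first.
  exact: sum_ent cK FK ca cb.
rewrite [RHS]big_enum_val; apply: eq_bigr => g _; by rewrite /ent !mxE.
Qed.

Lemma tfU n (U : {set {set 'I_n}}) i : is_complex U -> Zacyclic U i ->
 forall (k:int) (y : 'cV[int]_#|fcs U i|) (x : 'cV[int]_#|fcs U i.+1|), k != 0 ->
   bdm int U i *m x = k *: y -> exists x' : 'cV[int]_#|fcs U i.+1|, bdm int U i *m x' = y.
Proof.
move=> cU; case: i => [|i] zU k y x k0 Ax; first exact: (zU y I).
apply: zU; rewrite /is_cycle.
have : k *: (bdm int U i *m y) = 0 by rewrite scalemxAr -Ax mulmxA bdm_bdm // mul0mx.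
by move/eqP; rewrite scalemx_eq0 (negbTE k0) /= => /eqP.
Qed.

Lemma injU n (U : {set {set 'I_n}}) i : Zacyclic U i.+1 -> #|fcs U i.+2| = 0%N ->
  forall x : 'cV[int]_#|fcs U i.+1|, bdm int U i *m x = 0 -> x = 0.
Proof.
move=> zU c0 x Ax; have [b <-] := zU x Ax.
have -> : b = 0 by apply/matrixP=> j; exfalso; move: (leq_trans (ltn_ord j) (eq_leq c0)).
by rewrite mulmx0.
Qed.

Lemma sum_pick (T : finType) (A : {pred T}) (c : 'I_#|A| -> int) (F : T) j :
  enum_val j = F -> \sum_(k | enum_val k == F) c k = c j.
Proof.
move=> <-; rewrite (big_pred1 j) // => k /=; exact: (inj_eq enum_val_inj).
Qed.

Theorem claim4 (n d i : nat) (D U : {set {set 'I_n}}) :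
  is_complex D -> pure D d -> APC D d -> (i < d)%N ->
  spanning_tree (skel D i) i U ->
  Zacyclic U i ->
  let Theta := fcs D i.+1 :\: fcs U i.+1 in
  forall x : 'cV[int]_#|fcs D i.+1|,
    (exists c : 'cV[int]_#|fcs D i.+1|, x = laplacian D i *m c) <->
    (exists c : 'cV[int]_#|fcs D i.+1|,
        (forall j, enum_val (A := fcs D i.+1) j \notin Theta -> c j 0 = 0) /\
        x = laplacian D i *m c).
Proof.
move=> cD _ _ _ [[cU sU] skelE zU1 _ _] zU Theta x.
split; last by case=> c [_ ->]; exists c.
case=> c ->.
have fU0 : fcs U i = fcs D i.
  apply/setP=> F; rewrite /fcs !inE.
  have := congr1 (fun S : {set {set 'I_n}} => F \in S) skelE; rewrite /skel_sz /skel /= !inE.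
  by case: (eqVneq #|F| i) => [->|]; rewrite ?leqnn ?leqnSn ?andbT ?andbF.
have fU1 : forall F, F \in fcs U i.+1 -> F \in fcs D i.+1.
  move=> F; rewrite !inE => /andP[FU ->]; rewrite andbT.
  by have := subsetP sU F FU; rewrite inE => /andP[].
have fU2 : #|fcs U i.+2| = 0%N.
  apply/eqP; rewrite cards_eq0; apply/eqP/setP=> F; rewrite !inE.
  apply/negbTE/andP=> [[FU /eqP cF]].
  by have := subsetP sU F FU; rewrite inE cF ltnn andbF.
pose cf F := \sum_(j | enum_val (A := fcs D i.+1) j == F) c j 0.
pose w : 'cV[int]_#|fcs U i.+1| := \col_b cf (enum_val (A := fcs U i.+1) b).
have [u Au] := surjT (injU zU1 fU2) (tfU cU zU) w.
pose uf G := \sum_(a | enum_val (A := fcs U i) a == G) u a 0.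
pose e : 'cV[int]_#|fcs D i| := \col_a uf (enum_val (A := fcs D i) a).
exists (c - (bdm int D i)^T *m e); split; last first.
  rewrite mulmxBr /laplacian -!mulmxA.
  by rewrite (mulmxA (bdm int D i.+1)^T) -trmx_mul bdm_bdm // trmx0 mul0mx mulmx0 subr0.
move=> j; rewrite /Theta inE (enum_valP j) andbT negbK => FU.
set F := enum_val j in FU *.
pose b := enum_rank_in FU F.
have bF : enum_val b = F by rewrite /b enum_rankK_in.
have := congr1 (fun M : 'cV[int]_#|fcs U i.+1| => M b 0) Au.
rewrite !mxE bF.
rewrite /cf (sum_pick _ (erefl F)) => <-.
apply/eqP; rewrite subr_eq0; apply/eqP.
pose g (G : {set 'I_n}) := (if G \subset F then bsign int G F else 0) * uf G.
transitivity (\sum_(G in fcs U i) g G).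
  rewrite [RHS]big_enum_val; apply: eq_bigr => a _; rewrite !mxE bF /g /uf.
  by rewrite (sum_pick _ (erefl _)).
rewrite fU0 [LHS]big_enum_val; apply: eq_bigr => a _; rewrite /e !mxE.
by [].
Qed.
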